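(* Let $\gamma>0$, $\tau>1$, $\alpha\in D_{\gamma,\tau}$, and let $p_n/q_n$ be the convergents of $\alpha$. For even $n$ put $I_n:=\left(\frac{p_n}{q_n},\frac{p_{n+2}}{q_{n+2}}\right)$. Suppose there is $N\in\mathbb{N}$ such that for every even $n>N$, $$\frac{p_n}{q_n}+\frac{\gamma}{q_n^{\tau+1}}<\frac{p_{n+2}}{q_{n+2}}-\frac{\gamma}{q_{n+2}^{\tau+1}},$$ and for even $n>N$ define $A_n:=\left(\frac{p_n}{q_n}+\frac{\gamma}{q_n^{\tau+1}},\ \frac{p_{n+2}}{q_{n+2}}-\frac{\gamma}{q_{n+2}^{\tau+1}}\right)$. Suppose moreover that for every even $n$, $$\alpha-\frac{p_n}{q_n}>\frac{\gamma}{q_n^{\tau+1}}.$$ Then there exists $N_1\in\mathbb{N}$ such that for every even $n>N_1$ and every rational $p/q$ ($p\in\mathbb{Z},q\in\mathbb{N}$): if $p/q\notin I_n$, then $\frac{p}{q}+\frac{\gamma}{q^{\tau+1}}\notin A_n$ and $\frac{p}{q}-\frac{\gamma}{q^{\tau+1}}\notin A_n$.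
   Context: For $x\in\mathbb{R}$, $\|x\|:=\min_{p\in\mathbb{Z}}|x-p|$; $\mathbb{N}=\{1,2,\dots\}$. For $\gamma>0,\tau\ge1$, $D_{\gamma,\tau}:=\{\alpha\in(0,1): \|q\alpha\|\ge\gamma/q^\tau\ \forall q\in\mathbb{N}\}$; its elements are irrational. For irrational $\alpha\in(0,1)$ write $\alpha=\cfrac{1}{a_1+\cfrac{1}{a_2+\cdots}}$ (so $a_0=0$), and let $p_n/q_n$ ($n\ge0$) be its convergents: $p_{-1}=1,q_{-1}=0,p_0=0,q_0=1$, $p_n=a_np_{n-1}+p_{n-2}$, $q_n=a_nq_{n-1}+q_{n-2}$. Even-indexed convergents lie below $\alpha$. *)

(* Defs.v *)
From Stdlib Require Import Reals Lra Lia ZArith Arith.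
Open Scope R_scope.

(* Diophantine set D_{gamma,tau}: alpha in (0,1) and for every q >= 1,
   ||q alpha|| = min_{p in Z} |q alpha - p| >= gamma / q^tau. *)
Definition Dset (gamma tau alpha : R) : Prop :=
  0 < alpha < 1 /\
  forall (q : nat) (p : Z), (1 <= q)%nat ->
    Rabs (INR q * alpha - IZR p) >= gamma / Rpower (INR q) tau.

(* Gauss map iterates: x_0 = alpha, x_{n+1} = 1/x_n - floor(1/x_n).
   (Int_part x = up x - 1 is the floor of x.) *)
Fixpoint gauss (alpha : R) (n : nat) : R :=
  match n with
  | O => alpha
  | S m => / gauss alpha m - IZR (Int_part (/ gauss alpha m))
  end.

Definition cf_a (alpha : R) (n : nat) : Z :=
  match n with
  | O => 0%Z
  | S m => Int_part (/ gauss alpha m)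
  end.

(* (p_{n-1}, q_{n-1}, p_n, q_n) *)
Fixpoint cf_pq (alpha : R) (n : nat) : Z * Z * Z * Z :=
  match n with
  | O => (1%Z, 0%Z, 0%Z, 1%Z)
  | S m =>
      let '(p', q', p, q) := cf_pq alpha m in
      let a := cf_a alpha (S m) in
      (p, q, (a * p + p')%Z, (a * q + q')%Z)
  end.

Definition cf_p (alpha : R) (n : nat) : Z := let '(_, _, p, _) := cf_pq alpha n in p.
Definition cf_q (alpha : R) (n : nat) : Z := let '(_, _, _, q) := cf_pq alpha n in q.

Definition conv (alpha : R) (n : nat) : R := IZR (cf_p alpha n) / IZR (cf_q alpha n).

Definition cf_shift (gamma tau q : R) : R := gamma / Rpower q (tau + 1).

(* Main.v *)
Require Import Defs.
From Stdlib Require Import Reals ZArith Arith Lra Lia Psatz.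
Open Scope R_scope.

Definition pp (a : R) (k : nat) : Z := let '(x, _, _, _) := cf_pq a k in x.
Definition qq (a : R) (k : nat) : Z := let '(_, x, _, _) := cf_pq a k in x.

Lemma pq_S a k :
  cf_p a (S k) = (cf_a a (S k) * cf_p a k + pp a k)%Z /\
  cf_q a (S k) = (cf_a a (S k) * cf_q a k + qq a k)%Z /\
  pp a (S k) = cf_p a k /\ qq a (S k) = cf_q a k.
Proof.
  unfold cf_p, cf_q, pp, qq. cbn [cf_pq].
  destruct (cf_pq a k) as [[[x y] z] w]. auto.
Qed.

Lemma pq_0 a : cf_p a 0 = 0%Z /\ cf_q a 0 = 1%Z /\ pp a 0 = 1%Z /\ qq a 0 = 0%Z.
Proof. unfold cf_p, cf_q, pp, qq; simpl; auto. Qed.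

Definition Dt a k := (cf_p a k * qq a k - pp a k * cf_q a k)%Z.

Lemma det a k : (Dt a k = (-1)%Z /\ Nat.Even k) \/ (Dt a k = 1%Z /\ Nat.Odd k).
Proof.
  induction k.
  - left. unfold Dt. destruct (pq_0 a) as (?&?&?&?). rewrite H, H0, H1, H2.
    split; [reflexivity| exists 0%nat; reflexivity].
  - destruct (pq_S a k) as (E1&E2&E3&E4).
    assert (Dt a (S k) = - Dt a k)%Z.
    { unfold Dt. rewrite E1, E2, E3, E4. ring. }
    destruct IHk as [[H1 H2]|[H1 H2]].
    + right. split; [lia|]. destruct H2 as [m Hm]. exists m. lia.
    + left. split; [lia|]. destruct H2 as [m Hm]. exists (S m). lia.
Qed.

Lemma det_even a k : Nat.Even k -> Dt a k = (-1)%Z.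
Proof.
  intros He. destruct (det a k) as [[H _]|[_ H]]; auto.
  exfalso. eapply Nat.Even_Odd_False; eauto.
Qed.

Lemma det_odd a k : Nat.Odd k -> Dt a k = 1%Z.
Proof.
  intros He. destruct (det a k) as [[_ H]|[H _]]; auto.
  exfalso. eapply Nat.Even_Odd_False; eauto.
Qed.

Lemma Rpower_pos x y : 0 < Rpower x y.
Proof. unfold Rpower. apply exp_pos. Qed.

Lemma IZR_nat (z : Z) : (0 <= z)%Z -> INR (Z.to_nat z) = IZR z.
Proof. intros. rewrite INR_IZR_INZ, Z2Nat.id; auto. Qed.

Lemma Dset_Z gamma tau alpha : Dset gamma tau alpha ->
  forall (q p : Z), (1 <= q)%Z ->
  Rabs (IZR q * alpha - IZR p) >= gamma / Rpower (IZR q) tau.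
Proof.
  intros [_ H] q p Hq. rewrite <- (IZR_nat q) by lia. apply H. lia.
Qed.

Lemma Dset_ne gamma tau alpha : 0 < gamma -> Dset gamma tau alpha ->
  forall (q p : Z), (1 <= q)%Z -> alpha * IZR q <> IZR p.
Proof.
  intros Hg HD q p Hq E. pose proof (Dset_Z _ _ _ HD q p Hq) as H.
  replace (IZR q * alpha - IZR p) with 0 in H by lra.
  rewrite Rabs_R0 in H. pose proof (Rpower_pos (IZR q) tau).
  assert (0 < gamma / Rpower (IZR q) tau) by (apply Rdiv_lt_0_compat; auto). lra.
Qed.

Lemma formula gamma tau alpha : 0 < gamma -> Dset gamma tau alpha -> forall k,
  0 < gauss alpha k < 1 /\ (1 <= cf_q alpha k)%Z /\ (0 <= qq alpha k)%Z /\
  alpha * (IZR (cf_q alpha k) + IZR (qq alpha k) * gauss alpha k)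
   = IZR (cf_p alpha k) + IZR (pp alpha k) * gauss alpha k.
Proof.
  intros Hg HD. induction k.
  - destruct (pq_0 alpha) as (E1&E2&E3&E4). rewrite E1,E2,E3,E4.
    simpl. destruct HD as [H _]. repeat split; try lra; lia.
  - destruct IHk as (Ht & Hq & Hqq & Heq).
    destruct (pq_S alpha k) as (E1&E2&E3&E4).
    set (t := gauss alpha k) in *.
    assert (Hgs : gauss alpha (S k) = / t - IZR (cf_a alpha (S k))) by reflexivity.
    assert (Ha : cf_a alpha (S k) = Int_part (/ t)) by reflexivity.
    destruct (base_Int_part (/ t)) as [B1 B2]. rewrite <- Ha in B1, B2.
    assert (Hu : 1 < / t).
    { rewrite <- Rinv_1. apply Rinv_lt_contravar; lra. }
    assert (Ha1 : (1 <= cf_a alpha (S k))%Z).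
    { assert (0 < IZR (cf_a alpha (S k))) by lra. apply lt_IZR in H. lia. }
    assert (Hkey : alpha * (IZR (cf_q alpha (S k)) + IZR (qq alpha (S k)) * gauss alpha (S k))
      = IZR (cf_p alpha (S k)) + IZR (pp alpha (S k)) * gauss alpha (S k)).
    { rewrite E1, E2, E3, E4, Hgs. rewrite !plus_IZR, !mult_IZR.
      set (a := IZR (cf_a alpha (S k))).
      replace (a * IZR (cf_q alpha k) + IZR (qq alpha k) + IZR (cf_q alpha k) * (/ t - a))
        with ((IZR (cf_q alpha k) + IZR (qq alpha k) * t) * / t) by (field; lra).
      replace (a * IZR (cf_p alpha k) + IZR (pp alpha k) + IZR (cf_p alpha k) * (/ t - a))
        with ((IZR (cf_p alpha k) + IZR (pp alpha k) * t) * / t) by (field; lra).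
      rewrite <- Heq. ring. }
    assert (Hq1 : (1 <= cf_q alpha (S k))%Z) by (rewrite E2; nia).
    repeat split; auto.
    + rewrite Hgs. destruct (Req_dec (gauss alpha (S k)) 0) as [Z0|Z0].
      * exfalso. rewrite Z0 in Hkey. rewrite !Rmult_0_r, !Rplus_0_r in Hkey.
        revert Hkey. apply (Dset_ne gamma tau alpha Hg HD); auto.
      * rewrite Hgs in Z0. lra.
    + rewrite Hgs. lra.
    + lia.
Qed.

Lemma div_le a b c d : 0 < b -> 0 < d -> a / b <= c / d -> a * d <= c * b.
Proof.
  intros Hb Hd H.
  assert (a / b * (b * d) <= c / d * (b * d)) by (apply Rmult_le_compat_r; nra).
  replace (a / b * (b * d)) with (a * d) in H0 by (field; lra).
  replace (c / d * (b * d)) with (c * b) in H0 by (field; lra). exact H0.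
Qed.

Lemma div_lt a b c d : 0 < b -> 0 < d -> a / b < c / d -> a * d < c * b.
Proof.
  intros Hb Hd H.
  assert (a / b * (b * d) < c / d * (b * d)) by (apply Rmult_lt_compat_r; nra).
  replace (a / b * (b * d)) with (a * d) in H0 by (field; lra).
  replace (c / d * (b * d)) with (c * b) in H0 by (field; lra). exact H0.
Qed.

Lemma betwZ (P Q P' Q' p q : Z) : (1 <= Q)%Z -> (1 <= Q')%Z -> (1 <= q)%Z ->
  (P' * Q - P * Q' = 1)%Z ->
  IZR P / IZR Q <= IZR p / IZR q -> IZR p / IZR q <= IZR P' / IZR Q' ->
  exists u v, (0 <= u)%Z /\ (0 <= v)%Z /\ q = (Q' * u + Q * v)%Z /\
   (IZR P / IZR Q < IZR p / IZR q -> (1 <= u)%Z) /\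
   (IZR p / IZR q < IZR P' / IZR Q' -> (1 <= v)%Z).
Proof.
  intros HQ HQ' Hq Hd H1 H2.
  assert (0 < IZR Q) by (apply IZR_lt; lia).
  assert (0 < IZR Q') by (apply IZR_lt; lia).
  assert (0 < IZR q) by (apply IZR_lt; lia).
  exists (p * Q - P * q)%Z, (P' * q - p * Q')%Z.
  apply div_le in H1; auto. apply div_le in H2; auto.
  rewrite <- !mult_IZR in H1, H2. apply le_IZR in H1. apply le_IZR in H2.
  split; [lia|]. split; [lia|]. split.
  { replace q with (q * (P' * Q - P * Q'))%Z at 1 by (rewrite Hd; ring). ring. }
  split; intros H9; apply div_lt in H9; auto; rewrite <- !mult_IZR in H9;
    apply lt_IZR in H9; lia.
Qed.

Section F.
Variables gamma tau alpha : R.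
Hypothesis Hg : 0 < gamma.
Hypothesis HD : Dset gamma tau alpha.

Lemma q_pos k : (1 <= cf_q alpha k)%Z.
Proof. apply (formula gamma tau alpha Hg HD k). Qed.

Lemma a_pos k : (1 <= cf_a alpha (S k))%Z.
Proof.
  destruct (formula gamma tau alpha Hg HD k) as [Ht _].
  assert (Ha : cf_a alpha (S k) = Int_part (/ gauss alpha k)) by reflexivity.
  destruct (base_Int_part (/ gauss alpha k)) as [B1 B2]. rewrite <- Ha in B1, B2.
  assert (Hu : 1 < / gauss alpha k).
  { rewrite <- Rinv_1. apply Rinv_lt_contravar; lra. }
  assert (0 < IZR (cf_a alpha (S k))) by lra. apply lt_IZR in H. lia.
Qed.

Lemma q_grow k : (Z.of_nat k <= cf_q alpha (S k))%Z.
Proof.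
  induction k.
  - pose proof (q_pos 1). lia.
  - destruct (pq_S alpha (S k)) as (E1&E2&E3&E4). rewrite E2.
    destruct (pq_S alpha k) as (_&_&_&E5). rewrite E5.
    pose proof (a_pos (S k)). pose proof (q_pos k). pose proof (q_pos (S k)). nia.
Qed.

Lemma alpha_odd k : Nat.Odd k -> alpha * IZR (cf_q alpha k) < IZR (cf_p alpha k).
Proof.
  intros Ho. destruct (formula gamma tau alpha Hg HD k) as (Ht & Hq & Hqq & Heq).
  pose proof (det_odd alpha k Ho) as Hd. unfold Dt in Hd.
  set (t := gauss alpha k) in *.
  assert (Hid : (IZR (cf_q alpha k) + IZR (qq alpha k) * t) *
     (alpha * IZR (cf_q alpha k) - IZR (cf_p alpha k)) = - t).
  { replace (- t) with (- t * IZR (cf_p alpha k * qq alpha k - pp alpha k * cf_q alpha k))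
      by (rewrite Hd; ring).
    rewrite minus_IZR, !mult_IZR.
    replace ((IZR (cf_q alpha k) + IZR (qq alpha k) * t) *
      (alpha * IZR (cf_q alpha k) - IZR (cf_p alpha k))) with
      (IZR (cf_q alpha k) * (alpha * (IZR (cf_q alpha k) + IZR (qq alpha k) * t))
       - IZR (cf_q alpha k) * (IZR (cf_p alpha k) + IZR (pp alpha k) * t)
       + t * (IZR (cf_q alpha k) * IZR (pp alpha k) - IZR (qq alpha k) * IZR (cf_p alpha k))) by ring.
    rewrite Heq. ring. }
  assert (1 <= IZR (cf_q alpha k)) by (apply IZR_le; lia).
  assert (0 <= IZR (qq alpha k)) by (apply IZR_le; lia).
  destruct (Rlt_or_le (alpha * IZR (cf_q alpha k) - IZR (cf_p alpha k)) 0); [lra|].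
  assert (0 <= (IZR (cf_q alpha k) + IZR (qq alpha k) * t) *
     (alpha * IZR (cf_q alpha k) - IZR (cf_p alpha k))).
  { apply Rmult_le_pos; nra. }
  lra.
Qed.

End F.

Lemma le_div_r a b d : 0 < d -> a <= b -> a / d <= b / d.
Proof. intros. unfold Rdiv. apply Rmult_le_compat_r; [left; apply Rinv_0_lt_compat|]; auto. Qed.

Section G.
Variables gamma tau alpha : R.
Hypothesis Hg : 0 < gamma.
Hypothesis Ht : 1 < tau.
Hypothesis HD : Dset gamma tau alpha.

Notation p k := (cf_p alpha k).
Notation q k := (cf_q alpha k).
Notation s := (cf_shift gamma tau).

Lemma s_pos y : 0 < s y.
Proof. unfold cf_shift. apply Rdiv_lt_0_compat; auto. apply Rpower_pos. Qed.

Lemma s_split y : 0 < y -> s y = gamma / (y * Rpower y tau).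
Proof.
  intros Hy. unfold cf_shift. rewrite Rpower_plus, Rpower_1 by auto. f_equal. ring.
Qed.

Lemma s_mono y1 y2 : 1 <= y1 <= y2 -> s y2 <= s y1.
Proof.
  intros Hy. unfold cf_shift. unfold Rdiv. apply Rmult_le_compat_l; [lra|].
  apply Rinv_le_contravar. apply Rpower_pos. apply Rle_Rpower_l; lra.
Qed.

Lemma E2 n : Nat.Even n -> (p (S n) * q n - p n * q (S n) = 1)%Z.
Proof.
  intros He. assert (Ho : Nat.Odd (S n)) by (destruct He as [m Hm]; exists m; lia).
  pose proof (det_odd alpha _ Ho) as H. unfold Dt in H.
  destruct (pq_S alpha n) as (_&_&E3&E4). rewrite E3, E4 in H. lia.
Qed.

Lemma E3 n : Nat.Even n -> (p (S n) * q (S (S n)) - p (S (S n)) * q (S n) = 1)%Z.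
Proof.
  intros He. assert (Ho : Nat.Even (S (S n))) by (destruct He as [m Hm]; exists (S m); lia).
  pose proof (det_even alpha _ Ho) as H. unfold Dt in H.
  destruct (pq_S alpha (S n)) as (_&_&E3&E4). rewrite E3, E4 in H. lia.
Qed.

Lemma E6 n : Nat.Even n -> (1 <= p (S (S n)) * q n - p n * q (S (S n)))%Z.
Proof.
  intros He. pose proof (E2 n He) as H2.
  destruct (pq_S alpha (S n)) as (F1&F2&_&_).
  destruct (pq_S alpha n) as (_&_&F3&F4).
  rewrite F3 in F1. rewrite F4 in F2.
  assert (p (S (S n)) * q n - p n * q (S (S n)) =
          cf_a alpha (S (S n)) * (p (S n) * q n - p n * q (S n)))%Z
    by (rewrite F1, F2; ring).
  rewrite H, H2. pose proof (a_pos gamma tau alpha Hg HD (S n)). lia.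
Qed.

Lemma Q_pos k : 1 <= IZR (q k).
Proof. apply IZR_le. apply (q_pos gamma tau alpha Hg HD). Qed.

Lemma alpha_lt_odd n : Nat.Even n -> alpha < conv alpha (S n).
Proof.
  intros He. assert (Ho : Nat.Odd (S n)) by (destruct He as [m Hm]; exists m; lia).
  pose proof (alpha_odd gamma tau alpha Hg HD _ Ho). pose proof (Q_pos (S n)).
  unfold conv. apply (Rmult_lt_reg_r (IZR (q (S n)))); [lra|].
  unfold Rdiv. rewrite Rmult_assoc, Rinv_l by lra. lra.
Qed.

Lemma conv_lt_even n : Nat.Even n -> conv alpha n < conv alpha (S (S n)).
Proof.
  intros He. pose proof (E6 n He). unfold conv.
  pose proof (Q_pos n). pose proof (Q_pos (S (S n))).
  assert (1 <= IZR (p (S (S n)) * q n - p n * q (S (S n)))) by (apply IZR_le; lia).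
  rewrite minus_IZR, !mult_IZR in H2.
  apply (Rmult_lt_reg_r (IZR (q n) * IZR (q (S (S n))))); [nra|].
  replace (IZR (p n) / IZR (q n) * (IZR (q n) * IZR (q (S (S n)))))
    with (IZR (p n) * IZR (q (S (S n)))) by (field; lra).
  replace (IZR (p (S (S n))) / IZR (q (S (S n))) * (IZR (q n) * IZR (q (S (S n)))))
    with (IZR (p (S (S n))) * IZR (q n)) by (field; lra).
  lra.
Qed.

Lemma alpha_minus_conv n : Nat.Even n -> alpha - conv alpha n < / IZR (q n).
Proof.
  intros He. pose proof (alpha_lt_odd n He). pose proof (E2 n He).
  pose proof (Q_pos n). pose proof (Q_pos (S n)).
  assert (conv alpha (S n) - conv alpha n = / (IZR (q n) * IZR (q (S n)))).
  { unfold conv. apply (f_equal IZR) in H0. rewrite minus_IZR, !mult_IZR in H0.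
    replace (IZR (p (S n)) / IZR (q (S n)) - IZR (p n) / IZR (q n)) with
      ((IZR (p (S n)) * IZR (q n) - IZR (p n) * IZR (q (S n))) / (IZR (q n) * IZR (q (S n))))
      by (field; lra).
    rewrite H0. unfold Rdiv. ring. }
  assert (/ (IZR (q n) * IZR (q (S n))) <= / IZR (q n)).
  { apply Rinv_le_contravar; nra. }
  lra.
Qed.

Lemma between_even k (pz qz : Z) : Nat.Even k -> (1 <= qz)%Z ->
  conv alpha k <= IZR pz / IZR qz -> IZR pz / IZR qz <= conv alpha (S k) ->
  exists u v, (0 <= u)%Z /\ (0 <= v)%Z /\ qz = (q (S k) * u + q k * v)%Z /\
   (conv alpha k < IZR pz / IZR qz -> (1 <= u)%Z) /\
   (IZR pz / IZR qz < conv alpha (S k) -> (1 <= v)%Z).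
Proof.
  intros He Hq H1 H2. apply betwZ; auto.
  - apply (q_pos gamma tau alpha Hg HD).
  - apply (q_pos gamma tau alpha Hg HD).
  - apply E2; auto.
Qed.

Lemma dio_x (pz : Z) (qz : Z) : (1 <= qz)%Z ->
  alpha - IZR pz / IZR qz >= s (IZR qz) \/ IZR pz / IZR qz - alpha >= s (IZR qz).
Proof.
  intros Hq. pose proof (Dset_Z _ _ _ HD qz pz Hq) as H.
  assert (1 <= IZR qz) by (apply IZR_le; lia).
  rewrite s_split by lra.
  pose proof (Rpower_pos (IZR qz) tau).
  assert (E : gamma / (IZR qz * Rpower (IZR qz) tau) = (gamma / Rpower (IZR qz) tau) / IZR qz)
    by (field; lra).
  rewrite E.
  destruct (Rle_or_lt 0 (IZR qz * alpha - IZR pz)) as [Hs|Hs].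
  - left. rewrite Rabs_right in H by lra.
    replace (alpha - IZR pz / IZR qz) with ((IZR qz * alpha - IZR pz) / IZR qz) by (field; lra).
    apply Rle_ge. apply le_div_r; lra.
  - right. rewrite Rabs_left in H by lra.
    replace (IZR pz / IZR qz - alpha) with (- (IZR qz * alpha - IZR pz) / IZR qz) by (field; lra).
    apply Rle_ge. apply le_div_r; lra.
Qed.

End G.

Section H.
Variables gamma tau alpha : R.
Variable N : nat.
Hypothesis Hg : 0 < gamma.
Hypothesis Ht : 1 < tau.
Hypothesis HD : Dset gamma tau alpha.
Hypothesis hsep : forall n : nat, Nat.Even n -> (N < n)%nat ->
     conv alpha n + cf_shift gamma tau (IZR (cf_q alpha n))
       < conv alpha (n + 2)%nat - cf_shift gamma tau (IZR (cf_q alpha (n + 2)%nat)).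
Hypothesis hgap : forall n : nat, Nat.Even n ->
     alpha - conv alpha n > cf_shift gamma tau (IZR (cf_q alpha n)).

Notation p k := (cf_p alpha k).
Notation q k := (cf_q alpha k).
Notation s := (cf_shift gamma tau).
Notation c := (conv alpha).

Lemma M_exists_gen L : exists M, M < alpha /\
  forall m, (m <= L)%nat -> Nat.Even m -> c m + s (IZR (q m)) <= M.
Proof.
  induction L as [|K IH].
  - exists (c 0 + s (IZR (q 0))). split.
    + pose proof (hgap 0 ltac:(exists 0%nat; reflexivity)). lra.
    + intros m Hm _. replace m with 0%nat by lia. lra.
  - destruct IH as [M [HM1 HM2]].
    destruct (Nat.Even_or_Odd (S K)) as [He|Ho].
    + exists (Rmax M (c (S K) + s (IZR (q (S K))))). split.
      * pose proof (hgap _ He). unfold Rmax; destruct Rle_dec; lra.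
      * intros m Hm Hme. destruct (Nat.eq_dec m (S K)) as [->|Hne].
        -- apply Rmax_r.
        -- eapply Rle_trans; [apply HM2; auto; lia| apply Rmax_l].
    + exists M. split; auto. intros m Hm Hme. destruct (Nat.eq_dec m (S K)) as [->|Hne].
      * exfalso. eapply Nat.Even_Odd_False; eauto.
      * apply HM2; auto; lia.
Qed.

Lemma c_lt_alpha n : Nat.Even n -> c n < alpha.
Proof. intros He. pose proof (hgap n He). pose proof (s_pos gamma tau Hg (IZR (q n))). lra. Qed.

Lemma even_SS n : Nat.Even n -> Nat.Even (S (S n)).
Proof. intros [m Hm]. exists (S m). lia. Qed.

Lemma between_case j (pz qz : Z) : Nat.Even j -> (1 <= qz)%Z -> (q (S j) <= qz)%Z ->
  IZR pz / IZR qz < c (S (S j)) -> IZR pz / IZR qz + s (IZR qz) <= c (S (S j)).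
Proof.
  intros He Hq Hqq Hx.
  pose proof (alpha_lt_odd gamma tau alpha Hg HD j He) as Ha1.
  pose proof (c_lt_alpha _ (even_SS j He)) as Ha2.
  pose proof (E3 alpha j He) as HE3.
  pose proof (Dset_Z _ _ _ HD (q (S j)) (p (S j)) (q_pos gamma tau alpha Hg HD _)) as Hd.
  pose proof (Q_pos gamma tau alpha Hg HD (S j)) as HQ1.
  pose proof (Q_pos gamma tau alpha Hg HD (S (S j))) as HQ2.
  assert (Hqr : 1 <= IZR qz) by (apply IZR_le; lia).
  assert (Hqq' : IZR (q (S j)) <= IZR qz) by (apply IZR_le; lia).
  unfold conv in Ha1, Ha2, Hx |- *.
  set (Q1 := IZR (q (S j))) in *. set (Q2 := IZR (q (S (S j)))) in *.
  set (P1 := IZR (p (S j))) in *. set (P2 := IZR (p (S (S j)))) in *.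
  assert (HE3r : P1 * Q2 - P2 * Q1 = 1).
  { unfold P1, P2, Q1, Q2. rewrite <- !mult_IZR, <- minus_IZR, HE3. reflexivity. }
  assert (A1 : Q1 * alpha < P1).
  { apply (Rmult_lt_compat_l Q1) in Ha1; [|lra].
    replace (Q1 * (P1 / Q1)) with P1 in Ha1 by (field; lra). lra. }
  assert (A2 : P2 * Q1 < Q2 * Q1 * alpha).
  { apply (Rmult_lt_compat_l (Q2 * Q1)) in Ha2; [|nra].
    replace (Q2 * Q1 * (P2 / Q2)) with (P2 * Q1) in Ha2 by (field; lra). lra. }
  rewrite Rabs_left in Hd by lra.
  pose proof (Rpower_pos Q1 tau) as HR1.
  set (R1 := Rpower Q1 tau) in *.
  assert (HA : gamma * Q2 < R1).
  { assert (gamma <= R1 * (- (Q1 * alpha - P1))).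
    { apply Rge_le in Hd. apply (Rmult_le_compat_l R1) in Hd; [|lra].
      replace (R1 * (gamma / R1)) with gamma in Hd by (field; lra). exact Hd. }
    assert (Q2 * (- (Q1 * alpha - P1)) < 1) by nra.
    nra. }
  pose proof (Rpower_pos (IZR qz) tau) as HRq0.
  set (Rq := Rpower (IZR qz) tau) in *.
  assert (HRq : R1 <= Rq) by (apply Rle_Rpower_l; lra).
  assert (Hint : 1 <= P2 * IZR qz - IZR pz * Q2).
  { apply div_lt in Hx; try lra. unfold P2, Q2 in *. rewrite <- !mult_IZR in Hx |- *.
    rewrite <- minus_IZR. apply lt_IZR in Hx. apply IZR_le. lia. }
  rewrite s_split by lra. fold Rq.
  assert (0 <= ((P2 * IZR qz - IZR pz * Q2) * Rq - gamma * Q2) / (IZR qz * Q2 * Rq)).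
  { unfold Rdiv. apply Rmult_le_pos; [nra|]. left. apply Rinv_0_lt_compat.
    pose proof (Rpower_pos (IZR qz) tau). fold Rq in H. apply Rmult_lt_0_compat; nra. }
  pose proof (Rpower_pos (IZR qz) tau). fold Rq in H0.
  replace (P2 / Q2) with (IZR pz / IZR qz + gamma / (IZR qz * Rq) +
    ((P2 * IZR qz - IZR pz * Q2) * Rq - gamma * Q2) / (IZR qz * Q2 * Rq)) by (field; lra).
  lra.
Qed.

Lemma gamma_lt_1 : gamma < 1.
Proof.
  pose proof (hgap 0 ltac:(exists 0%nat; reflexivity)) as H.
  destruct HD as [[_ Ha] _].
  unfold conv, cf_shift in H.
  assert (E : q 0 = 1%Z) by reflexivity. assert (E' : p 0 = 0%Z) by reflexivity.
  rewrite E, E' in H. unfold Rpower in H. rewrite ln_1, Rmult_0_r, exp_0 in H.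
  replace (IZR 0 / IZR 1) with 0 in H by (simpl; field). lra.
Qed.

Lemma Rmax_mono a b M : a <= b -> Rmax a M <= Rmax b M.
Proof. intros. unfold Rmax. destruct Rle_dec; destruct Rle_dec; lra. Qed.

Lemma Qlem M : (forall m, (m <= N)%nat -> Nat.Even m -> c m + s (IZR (q m)) <= M) ->
  forall i (pz qz : Z), (1 <= qz)%Z -> IZR pz / IZR qz < c (2 * i) ->
  IZR pz / IZR qz + s (IZR qz) <= Rmax (c (2 * i)) M.
Proof.
  intros HM. induction i; intros pz qz Hq Hx.
  - simpl in Hx |- *. assert (E0 : c 0 = 0).
    { unfold conv. assert (E : q 0 = 1%Z) by reflexivity. assert (E' : p 0 = 0%Z) by reflexivity.
      rewrite E, E'. unfold Rdiv. ring. }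
    rewrite E0 in Hx |- *.
    assert (Hqr : 1 <= IZR qz) by (apply IZR_le; lia).
    assert (Hp : (pz <= -1)%Z).
    { replace 0 with (0 / 1) in Hx by field. apply div_lt in Hx; try lra.
      rewrite <- !mult_IZR in Hx. apply lt_IZR in Hx. lia. }
    apply IZR_le in Hp.
    rewrite s_split by lra.
    pose proof (Rpower_pos (IZR qz) tau).
    assert (1 <= Rpower (IZR qz) tau).
    { rewrite <- (Rpower_O (IZR qz)) by lra. apply Rle_Rpower; lra. }
    pose proof gamma_lt_1.
    assert (IZR pz / IZR qz + gamma / (IZR qz * Rpower (IZR qz) tau) < 0).
    { assert (gamma / (IZR qz * Rpower (IZR qz) tau) <= gamma / IZR qz).
      { unfold Rdiv. apply Rmult_le_compat_l; [lra|]. apply Rinv_le_contravar; nra. }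
      assert (IZR pz / IZR qz + gamma / IZR qz < 0).
      { replace (IZR pz / IZR qz + gamma / IZR qz) with ((IZR pz + gamma) * / IZR qz) by (field; lra).
        assert (0 < / IZR qz) by (apply Rinv_0_lt_compat; lra). nra. }
      lra. }
    pose proof (Rmax_l 0 M). lra.
  - replace (2 * S i)%nat with (S (S (2 * i))) in Hx |- * by lia.
    set (j := (2 * i)%nat) in *.
    assert (He : Nat.Even j) by (exists i; reflexivity).
    pose proof (conv_lt_even gamma tau alpha Hg HD j He) as Hcc.
    pose proof (alpha_lt_odd gamma tau alpha Hg HD j He) as Ha1.
    pose proof (c_lt_alpha _ (even_SS j He)) as Ha2.
    pose proof (c_lt_alpha _ He) as Ha0.
    pose proof (Rmax_l (c (S (S j))) M) as Hml.
    pose proof (Rmax_r (c (S (S j))) M) as Hmr.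
    destruct (Rtotal_order (IZR pz / IZR qz) (c j)) as [Hlt|[Heq|Hgt]].
    + eapply Rle_trans; [apply IHi; auto|]. apply Rmax_mono; lra.
    + destruct (between_even gamma tau alpha Hg HD j pz qz He Hq ltac:(lra) ltac:(lra))
        as (u & v & Hu & Hv & Hqe & _ & Hv1).
      specialize (Hv1 ltac:(lra)).
      pose proof (q_pos gamma tau alpha Hg HD (S j)).
      pose proof (q_pos gamma tau alpha Hg HD j).
      assert (Hqj : (q j <= qz)%Z) by nia.
      assert (s (IZR qz) <= s (IZR (q j))).
      { apply s_mono; auto. split; [apply (Q_pos gamma tau alpha Hg HD)| apply IZR_le; lia]. }
      destruct (le_lt_dec j N) as [HjN|HjN].
      * pose proof (HM j HjN He). lra.
      * pose proof (hsep j He HjN). replace (j + 2)%nat with (S (S j)) in H2 by lia.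
        pose proof (s_pos gamma tau Hg (IZR (q (S (S j))))). lra.
    + destruct (between_even gamma tau alpha Hg HD j pz qz He Hq ltac:(lra) ltac:(lra))
        as (u & v & Hu & Hv & Hqe & Hu1 & _).
      specialize (Hu1 Hgt).
      pose proof (q_pos gamma tau alpha Hg HD (S j)).
      pose proof (q_pos gamma tau alpha Hg HD j).
      assert (Hqj : (q (S j) <= qz)%Z) by nia.
      pose proof (between_case j pz qz He Hq Hqj Hx). lra.
Qed.
End H.

Theorem lemma1 (gamma tau alpha : R) (N : nat)
  (hgamma : 0 < gamma) (htau : 1 < tau) (hD : Dset gamma tau alpha)
  (hsep : forall n : nat, Nat.Even n -> (N < n)%nat ->
     conv alpha n + cf_shift gamma tau (IZR (cf_q alpha n))
       < conv alpha (n + 2)%nat - cf_shift gamma tau (IZR (cf_q alpha (n + 2)%nat)))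
  (hgap : forall n : nat, Nat.Even n ->
     alpha - conv alpha n > cf_shift gamma tau (IZR (cf_q alpha n))) :
  exists N1 : nat, (N <= N1)%nat /\
    forall n : nat, Nat.Even n -> (N1 < n)%nat ->
    forall (p : Z) (q : nat), (1 <= q)%nat ->
      ~ (conv alpha n < IZR p / INR q < conv alpha (n + 2)%nat) ->
      ~ (conv alpha n + cf_shift gamma tau (IZR (cf_q alpha n))
           < IZR p / INR q + cf_shift gamma tau (INR q)
           < conv alpha (n + 2)%nat - cf_shift gamma tau (IZR (cf_q alpha (n + 2)%nat))) /\
      ~ (conv alpha n + cf_shift gamma tau (IZR (cf_q alpha n))
           < IZR p / INR q - cf_shift gamma tau (INR q)
           < conv alpha (n + 2)%nat - cf_shift gamma tau (IZR (cf_q alpha (n + 2)%nat))).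
Proof.
  destruct (M_exists_gen gamma tau alpha hgap N) as [M [HM1 HM2]].
  destruct (archimed_cor1 (alpha - M) ltac:(lra)) as [K [HK1 HK2]].
  exists (N + K + 1)%nat. split; [lia|].
  intros n He Hn p q Hq Hnot.
  replace (n + 2)%nat with (S (S n)) in * by lia.
  rewrite (INR_IZR_INZ q) in *. remember (Z.of_nat q) as qz eqn:Eqz.
  assert (Hqz : (1 <= qz)%Z) by lia.
  pose proof (s_pos gamma tau hgamma (IZR qz)) as Hs.
  pose proof (s_pos gamma tau hgamma (IZR (cf_q alpha n))) as Hs0.
  pose proof (s_pos gamma tau hgamma (IZR (cf_q alpha (S (S n))))) as Hs2.
  assert (HcM : M < conv alpha n).
  { pose proof (alpha_minus_conv gamma tau alpha hgamma hD n He) as H1.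
    assert (Hg : (Z.of_nat (n - 1) <= cf_q alpha n)%Z).
    { replace n with (S (n - 1)) at 2 by lia. apply (q_grow gamma tau alpha hgamma hD). }
    assert (HKq : INR K <= IZR (cf_q alpha n)).
    { rewrite INR_IZR_INZ. apply IZR_le. lia. }
    assert (0 < INR K) by (apply lt_0_INR; lia).
    assert (/ IZR (cf_q alpha n) <= / INR K) by (apply Rinv_le_contravar; lra).
    lra. }
  pose proof (conv_lt_even gamma tau alpha hgamma hD n He) as Hcc.
  assert (Hx : (IZR p / IZR qz) <= conv alpha n \/ conv alpha (S (S n)) <= (IZR p / IZR qz)).
  { destruct (Rle_or_lt (IZR p / IZR qz) (conv alpha n)); [left; auto|].
    destruct (Rle_or_lt (conv alpha (S (S n))) (IZR p / IZR qz)); [right; auto|]. exfalso; apply Hnot; split; auto. }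
  destruct Hx as [Hx|Hx].
  - split.
    + assert ((IZR p / IZR qz) + cf_shift gamma tau (IZR qz) <= conv alpha n + cf_shift gamma tau (IZR (cf_q alpha n))); [|lra].
      destruct Hx as [Hx|Hx].
      * destruct He as [i Hi].
        pose proof (Qlem gamma tau alpha N hgamma htau hD hsep hgap M HM2 i p qz Hqz) as HQ.
        rewrite <- Hi in HQ. specialize (HQ Hx).
        rewrite Rmax_left in HQ. 2:{ lra. } lra.
      * pose proof (alpha_lt_odd gamma tau alpha hgamma hD n He).
        pose proof (c_lt_alpha gamma tau alpha hgamma hgap n He).
        destruct (between_even gamma tau alpha hgamma hD n p qz He Hqz ltac:(lra) ltac:(lra))
          as (u & v & Hu & Hv & Hqe & _ & Hv1).
        specialize (Hv1 ltac:(lra)).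
        pose proof (q_pos gamma tau alpha hgamma hD (S n)).
        pose proof (q_pos gamma tau alpha hgamma hD n).
        assert (Hqj : (cf_q alpha n <= qz)%Z) by nia.
        assert (cf_shift gamma tau (IZR qz) <= cf_shift gamma tau (IZR (cf_q alpha n))).
        { apply s_mono; auto. split; [apply (Q_pos gamma tau alpha hgamma hD)| apply IZR_le; lia]. }
        lra.
    + lra.
  - split; [lra|].
    assert (conv alpha (S (S n)) - cf_shift gamma tau (IZR (cf_q alpha (S (S n)))) <= (IZR p / IZR qz) - cf_shift gamma tau (IZR qz)); [|lra].
    assert (He2 : Nat.Even (S (S n))) by (apply even_SS; auto).
    pose proof (c_lt_alpha gamma tau alpha hgamma hgap _ He2) as Ha2.
    pose proof (alpha_lt_odd gamma tau alpha hgamma hD _ He2) as Ha3.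
    destruct (dio_x gamma tau alpha hD p qz Hqz) as [Hd|Hd]; idtac.
    + destruct (between_even gamma tau alpha hgamma hD (S (S n)) p qz He2 Hqz
         ltac:(lra) ltac:(lra))
          as (u & v & Hu & Hv & Hqe & _ & Hv1).
      specialize (Hv1 ltac:(lra)).
      pose proof (q_pos gamma tau alpha hgamma hD (S (S (S n)))).
      pose proof (q_pos gamma tau alpha hgamma hD (S (S n))).
      assert (Hqj : (cf_q alpha (S (S n)) <= qz)%Z) by nia.
      assert (cf_shift gamma tau (IZR qz) <= cf_shift gamma tau (IZR (cf_q alpha (S (S n))))).
      { apply s_mono; auto. split; [apply (Q_pos gamma tau alpha hgamma hD)| apply IZR_le; lia]. }
      lra.
    + lra.
Qed.
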